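(* Let $\mathbb{K}$ be an algebraically closed field of characteristic zero and let $D=\partial_x+(ay+b)\partial_y$ be a derivation of $\mathbb{K}[x,y]$ with $a,b\in\mathbb{K}[x]$ and $a\neq 0$. Then $D$ is simple if and only if $\mathrm{Aut}(D)=\{\mathrm{id}\}$.
   Context: A derivation of $\mathbb{K}[x,y]$ is a $\mathbb{K}$-linear map $D$ with $D(fg)=gD(f)+fD(g)$. $D$ is simple if there is no ideal $I$ with $(0)\neq I\neq \mathbb{K}[x,y]$ and $D(I)\subseteq I$. $\mathrm{Aut}(D)$ denotes the group of $\mathbb{K}$-algebra automorphisms $\rho$ of $\mathbb{K}[x,y]$ with $\rho D=D\rho$. *)

(* Defs.v *)
From HB Require Import structures.
From mathcomp Require Import all_boot all_order all_algebra.
Set Implicit Arguments. Unset Strict Implicit. Unset Printing Implicit Defensive.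
Import GRing.Theory.
Local Open Scope ring_scope.

(* K[x,y] is represented as {poly {poly K}}: polynomials in y whose
   coefficients are polynomials in x. *)
Notation Kxy K := {poly {poly K}}.

Definition dx (K : fieldType) (f : Kxy K) : Kxy K := map_poly (@deriv _) f.
Definition dy (K : fieldType) (f : Kxy K) : Kxy K := deriv f.

Definition Dab (K : fieldType) (a b : {poly K}) (f : Kxy K) : Kxy K :=
  dx f + (a%:P * 'X + b%:P) * dy f.

Definition is_ideal (R : comRingType) (I : R -> Prop) : Prop :=
  I 0 /\ (forall u v, I u -> I v -> I (u + v)) /\ (forall r u, I u -> I (r * u)).

Definition simple_derivation (R : comRingType) (D : R -> R) : Prop :=
  ~ exists I : R -> Prop,
      [/\ is_ideal I, (exists u, I u /\ u <> 0), ~ I 1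
        & forall u, I u -> I (D u)].

Definition is_Kalg_aut (K : fieldType) (rho : Kxy K -> Kxy K) : Prop :=
  [/\ forall f g, rho (f + g) = rho f + rho g,
      forall f g, rho (f * g) = rho f * rho g,
      rho 1 = 1,
      forall (c : K) f, rho (c%:P%:P * f) = c%:P%:P * rho f
    & bijective rho].

Definition in_Aut (K : fieldType) (D : Kxy K -> Kxy K) (rho : Kxy K -> Kxy K) : Prop :=
  is_Kalg_aut rho /\ forall f, rho (D f) = D (rho f).

Definition Aut_trivial (K : fieldType) (D : Kxy K -> Kxy K) : Prop :=
  forall rho, in_Aut D rho -> forall f, rho f = f.

(* Main.v *)
Require Import Defs.
From HB Require Import structures.
From mathcomp Require Import all_boot all_order all_algebra ring.
From Stdlib Require Import Classical.
Import GRing.Theory.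
Local Open Scope ring_scope.

Lemma natr0_char {K : fieldType} (hchar : [pchar K] =i pred0) (n : nat) :
  (n%:R == 0 :> K) = (n == 0%N).
Proof. by move: n; apply/pcharf0P. Qed.

Lemma deriv0_size {K : fieldType} (hchar : [pchar K] =i pred0) (p : {poly K}) :
  p^`() = 0 -> (size p <= 1)%N.
Proof.
move=> h; apply/leq_sizeP => j hj.
case: j hj => // j _.
have := congr1 (fun q : {poly K} => q`_j) h; rewrite coef_deriv coef0 -mulr_natr.
move/eqP; rewrite mulf_eq0 natr0_char // orbF => /eqP //.
Qed.

Lemma coef_dx {K : fieldType} (f : Kxy K) i : (dx f)`_i = (f`_i)^`().
Proof. by rewrite /dx coef_map. Qed.

Lemma dxD {K : fieldType} (f g : Kxy K) : dx (f + g) = dx f + dx g.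
Proof. by apply/polyP => i; rewrite /dx coefD !coef_map /= coefD derivD. Qed.

Lemma dxN {K : fieldType} (f : Kxy K) : dx (- f) = - dx f.
Proof. by apply/polyP => i; rewrite /dx coefN !coef_map /= coefN derivN. Qed.

Lemma dxM {K : fieldType} (f g : Kxy K) : dx (f * g) = dx f * g + f * dx g.
Proof.
apply/polyP => i; rewrite coef_dx coefD !coefM.
rewrite (big_morph _ (@derivD _) (@deriv0 _)) -big_split /=.
by apply: eq_bigr => j _; rewrite derivM !coef_dx.
Qed.

Lemma dxC {K : fieldType} (c : {poly K}) : dx c%:P = (c^`())%:P.
Proof. by rewrite /dx map_polyC. Qed.

Lemma dxX {K : fieldType} : dx ('X : Kxy K) = 0.
Proof.
apply/polyP => i; rewrite coef_dx coef0 coefX.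
by case: (i == 1%N); rewrite /= ?deriv0 // -polyC1 derivC.
Qed.


Lemma coef_Dab {K : fieldType} (a b : {poly K}) (f : Kxy K) (k : nat) :
  (Dab a b f)`_k = (f`_k)^`() + k%:R * a * f`_k + k.+1%:R * b * f`_k.+1.
Proof.
rewrite /Dab coefD coef_dx mulrDl coefD -addrA; congr (_ + _).
rewrite -mulrA coefCM coefXM coefCM /dy !coef_deriv; congr (_ + _).
  case: k => [|k] /=; first by rewrite !mul0r mulr0.
  by rewrite mulrnAr mulr_natl mulrnAl.
by rewrite mulrnAr mulr_natl mulrnAl.
Qed.

Lemma DabD {K : fieldType} (a b : {poly K}) (f g : Kxy K) :
  Dab a b (f + g) = Dab a b f + Dab a b g.
Proof. by rewrite /Dab dxD /dy derivD mulrDr addrACA. Qed.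

Lemma DabN {K : fieldType} (a b : {poly K}) (f : Kxy K) :
  Dab a b (- f) = - Dab a b f.
Proof. by rewrite /Dab dxN /dy derivN mulrN opprD. Qed.

Lemma DabM {K : fieldType} (a b : {poly K}) (f g : Kxy K) :
  Dab a b (f * g) = Dab a b f * g + f * Dab a b g.
Proof.
rewrite /Dab dxM /dy derivM.
move: (a%:P * 'X + b%:P) (dx f) (dx g) f^`() g^`() => w u v p q.
by rewrite mulrDr mulrDl mulrDr !mulrA [f * w]mulrC addrACA.
Qed.

Lemma DabC {K : fieldType} (a b : {poly K}) (c : K) :
  Dab a b c%:P%:P = 0.
Proof. by rewrite /Dab dxC derivC /dy derivC mulr0 addr0. Qed.

Lemma DabX {K : fieldType} (a b : {poly K}) :
  Dab a b 'X = a%:P * 'X + b%:P.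
Proof. by rewrite /Dab dxX /dy derivX mulr1 add0r. Qed.

Lemma Dabx {K : fieldType} (a b : {poly K}) :
  Dab a b 'X%:P = 1.
Proof. by rewrite /Dab dxC derivX /dy derivC mulr0 addr0. Qed.


Lemma Kxy_ind {K : fieldType} (P : Kxy K -> Prop) :
  (forall c : K, P c%:P%:P) -> P 'X%:P -> P 'X ->
  (forall f g, P f -> P g -> P (f + g)) ->
  (forall f g, P f -> P g -> P (f * g)) -> forall f, P f.
Proof.
move=> hC hx hy hD hM.
have hCC : forall c : {poly K}, P c%:P.
  elim/poly_ind => [|q d IH]; first by rewrite -polyC0; apply: hC.
  by rewrite polyCD polyCM; apply: hD; [apply: hM|apply: hC].
elim/poly_ind => [|p c IH]; first by rewrite -polyC0; apply: hCC.
by apply: hD; [apply: hM|apply: hCC].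
Qed.

Lemma unit_Kxy {K : fieldType} (w : Kxy K) :
  w \is a GRing.unit -> exists c : K, w = c%:P%:P.
Proof.
rewrite poly_unitE => /andP [/eqP s1]; rewrite poly_unitE => /andP [/eqP s2 _].
exists (w`_0)`_0.
rewrite -size1_polyC; last by rewrite s2.
by rewrite -size1_polyC // s1.
Qed.

Lemma principal_not_simple {K : fieldType} (a b : {poly K}) (w t : Kxy K) :
  w != 0 -> (forall c : K, w <> c%:P%:P) -> Dab a b w = t * w ->
  ~ simple_derivation (Dab a b).
Proof.
move=> w0 wc hD; apply; exists (fun u => exists r, u = r * w); split.
- split; first by exists 0; rewrite mul0r.
  split.
    by move=> u v [r ->] [s ->]; exists (r + s); rewrite mulrDl.
  by move=> r u [s ->]; exists (r * s); rewrite mulrA.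
- exists w; split; [by exists 1; rewrite mul1r | exact/eqP].
- move=> [r hr].
  have : w \is a GRing.unit by apply/unitrPr; exists r; rewrite mulrC -hr.
  by move/unit_Kxy => [c hc]; apply: (wc c).
- move=> u [r ->]; exists (Dab a b r + r * t).
  by rewrite DabM hD mulrA -mulrDl.
Qed.

Lemma sol_not_simple {K : fieldType} (a b h : {poly K}) :
  h^`() = a * h - b -> ~ simple_derivation (Dab a b).
Proof.
move=> hh; apply: (@principal_not_simple _ _ _ ('X + h%:P) a%:P).
- by rewrite -size_poly_eq0 size_XaddC.
- by move=> c hc; have := size_XaddC h; rewrite hc size_polyC; case: (_ != _).
rewrite DabD DabX /Dab dxC /dy derivC mulr0 addr0 hh.
by rewrite mulrDr polyCB polyCM -addrA; congr (_ + _); rewrite addrC subrK.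
Qed.


Lemma coef_size (R : nzSemiRingType) (p : {poly R}) i : p`_i != 0 -> (i < size p)%N.
Proof. by move=> h; rewrite ltnNge; apply: contra h => /leq_sizeP ->. Qed.

Lemma ex_min_prop (P : nat -> Prop) :
  (exists n, P n) -> exists n, P n /\ forall m, P m -> (n <= m)%N.
Proof.
move=> [n Pn].
suff H : forall N n, (n <= N)%N -> P n -> exists n, P n /\ forall m, P m -> (n <= m)%N.
  exact: (H n n (leqnn n) Pn).
elim=> [|N IH] k hk Pk.
  exists k; split => // m _; by move: hk; rewrite leqn0 => /eqP ->.
case: (classic (exists m, (m < k)%N /\ P m)) => [[m [hm Pm]]|hno].
  by apply: (IH m) => //; rewrite -ltnS (leq_trans hm hk).
exists k; split => // m Pm; rewrite leqNgt; apply/negP => hm; apply: hno.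
by exists m.
Qed.

Lemma coefF {K : fieldType} (a b : {poly K}) (f : Kxy K) (d : nat) :
  (size f <= d.+1)%N ->
  (Dab a b f - (d%:R * a)%:P * f)%R`_d = (f`_d)^`() /\
  (size (Dab a b f - (d%:R * a)%:P * f)%R <= d.+1)%N.
Proof.
move=> hs; have hz : forall k, (d < k)%N -> f`_k = 0.
  by move=> k hk; apply: (leq_sizeP _ _ hs).
split.
  by rewrite coefB coef_Dab coefCM (hz d.+1) // mulr0 addr0 addrK.
apply: (introT (leq_sizeP _ _)) => j hj.
rewrite coefB coef_Dab coefCM (hz j) // (hz j.+1) ?(leq_trans hj) //.
by rewrite deriv0 !mulr0 !addr0 subr0.
Qed.

Lemma shamsuddin {K : fieldType} (hchar : [pchar K] =i pred0) (a b : {poly K}) :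
  ~ simple_derivation (Dab a b) -> exists h : {poly K}, h^`() = a * h - b.
Proof.
move=> /NNPP [I [[I0 [ID IM]] [u [Iu u0]] I1 IDs]].
have IN : forall v, I v -> I (- v) by move=> v Iv; rewrite -mulN1r; apply: IM.
have IB : forall v w, I v -> I w -> I (v - w) by move=> v w Iv Iw; apply: ID => //; apply: IN.
have [n [[f0 [If0 [f00 sf0]]] nmin]] : exists n,
   (exists f : Kxy K, I f /\ f != 0 /\ size f = n) /\
   forall m, (exists f : Kxy K, I f /\ f != 0 /\ size f = m) -> (n <= m)%N.
  by apply: ex_min_prop; exists (size u), u; split => //; split => //; apply/eqP.
have [m [[f [If [f0' [sf sr]]]] mmin]] : exists m,
   (exists f : Kxy K, I f /\ f != 0 /\ size f = n /\ size (lead_coef f) = m) /\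
   forall m', (exists f : Kxy K, I f /\ f != 0 /\ size f = n /\ size (lead_coef f) = m') -> (m <= m')%N.
  by apply: ex_min_prop; exists (size (lead_coef f0)), f0.
have n0 : (0 < n)%N by rewrite -sf size_poly_gt0.
have [d nd] : exists d, n = d.+1 by exists n.-1; rewrite prednK.
rewrite nd in sf0 sf nmin mmin; clear n0 nd.
have sfd : (size f <= d.+1)%N by rewrite sf.
have [cF sF] := coefF a b _ _ sfd.
set F := Dab a b f - (d%:R * a)%:P * f in cF sF.
have IF : I F by apply: IB; [apply: IDs | apply: IM].
have lf : lead_coef f = f`_d by rewrite /lead_coef sf.
have rd : (f`_d)^`() = 0.
  apply/eqP/negP => hne.
  have szF : size F = d.+1.
    apply/eqP; rewrite eqn_leq sF /=; apply: coef_size; rewrite cF; exact/negP.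
  have hlt : (size (lead_coef f)^`() < m)%N.
    by rewrite -sr; apply: lt_size_deriv; rewrite lead_coef_eq0.
  suff: (m <= size (lead_coef f)^`())%N by rewrite leqNgt hlt.
  apply: mmin; rewrite lf.
  exists F; split => //; split; first by rewrite -size_poly_gt0 szF.
  by split => //; rewrite /lead_coef szF /= cF.
have := deriv0_size hchar _ rd; rewrite leq_eqVlt ltnS leqn0 size_poly_eq0.
have fd0 : f`_d != 0 by rewrite -lf lead_coef_eq0.
rewrite (negbTE fd0) orbF => /eqP s1.
set r0 := (f`_d)`_0.
have hr : f`_d = r0%:P by rewrite [LHS]size1_polyC ?s1.
have r00 : r0 != 0 by rewrite -polyC_eq0 -hr.
set f1 := (r0^-1)%:P%:P * f.
have If1 : I f1 by apply: IM.
have sf1 : (size f1 <= d.+1)%N.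
  rewrite (leq_trans (size_mul_leq _ _)) // size_polyC polyC_eq0 invr_eq0 r00 sf; exact: leqnn.
have f1d : f1`_d = 1 by rewrite coefCM hr -polyCM mulVf.
clearbody f1.
have [cF1 sF1] := coefF a b _ _ sf1.
set F1 := Dab a b f1 - (d%:R * a)%:P * f1 in cF1 sF1.
have IF1 : I F1 by apply: IB; [apply: IDs | apply: IM].
have F10 : F1 = 0.
  apply/eqP/negP => hne.
  have : (size F1 <= d)%N.
    apply/leq_sizeP => j; rewrite leq_eqVlt => /orP [/eqP <-|hj].
      by rewrite cF1 f1d -polyC1 derivC.
    by apply: (leq_sizeP _ _ sF1).
  have := nmin (size F1) (ex_intro _ F1 (conj IF1 (conj (introN idP hne) erefl))).
  by move=> H1 H2; have := leq_trans H1 H2; rewrite ltnn.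
move: F10; rewrite /F1 => F10.
have [e de] : exists e, d = e.+1.
  case: (posnP d) => [d0|dpos]; last by exists d.-1; rewrite prednK.
  rewrite d0 in sf1 f1d; exfalso; apply: I1.
  suff <- : f1 = 1 by [].
  by rewrite [LHS]size1_polyC // f1d.
rewrite de in F10 f1d.
have := congr1 (fun q : Kxy K => q`_e) F10.
rewrite coefB coef_Dab coefCM f1d coef0 => /eqP.
set g := f1`_e.
rewrite subr_eq0 => /eqP hg.
exists ((e.+1%:R)^-1 *: g).
have hg' : g^`() = a * g - e.+1%:R * b.
  rewrite -(addrK (e%:R * a * g + e.+1%:R * b) g^`()) addrA -[_ * b]mulr1 hg.
  rewrite -[e.+1]addn1 natrD; ring.
rewrite derivZ hg' scalerBr scalerAr mulr_natl -scalerMnr scalerMnl -(mulr_natr (e.+1%:R^-1)) mulVf ?scale1r //.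
by rewrite natr0_char.
Qed.


Lemma const_sol {K : fieldType} (al : K) (al0 : al != 0) (b : {poly K}) :
  exists h : {poly K}, h^`() = al%:P * h - b.
Proof.
suff H : forall n (b : {poly K}), (size b <= n)%N -> exists h : {poly K}, h^`() = al%:P * h - b.
  exact: (H _ b (leqnn _)).
elim=> [|n IH] {}b hb.
  move: hb; rewrite leqn0 size_poly_eq0 => /eqP ->.
  by exists 0; rewrite deriv0 mulr0 subr0.
set t := (b`_n / al) *: ('X^n : {poly K}).
set b1 := b - (al%:P * t - t^`()).
have hb1 : (size b1 <= n)%N.
  apply/leq_sizeP => j hj.
  rewrite /b1 coefB coefB coefCM coef_deriv /t !coefZ !coefXn.
  have -> : (j.+1 == n) = false by apply/negbTE; rewrite neq_ltn ltnS hj orbT.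
  rewrite mulr0 mul0rn subr0.
  move: hj; rewrite leq_eqVlt => /orP [/eqP <-|hj].
    by rewrite eqxx mulr1 mulrCA divff // mulr1 subrr.
  rewrite (leq_sizeP _ _ hb j hj).
  have -> : (j == n) = false by apply/negbTE; rewrite neq_ltn hj orbT.
  by rewrite mulr0 mulr0 subr0.
have [h1 hh1] := IH b1 hb1.
exists (h1 + t); rewrite derivD hh1 /b1.
ring.
Qed.

Lemma simple_nonconst {K : fieldType} (a b : {poly K}) (ha : a != 0) :
  simple_derivation (Dab a b) -> (1 < size a)%N.
Proof.
move=> hs; rewrite ltnNge; apply/negP => sa.
have ea : a = (a`_0)%:P by rewrite [LHS]size1_polyC.
have a00 : a`_0 != 0 by rewrite -polyC_eq0 -ea.
have [h hh] := const_sol _ a00 b.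
by apply: (sol_not_simple a b h _ hs); rewrite ea.
Qed.


Lemma D_unique {K : fieldType} (rho E1 E2 : Kxy K -> Kxy K) :
  (forall f g, rho (f * g) = rho f * rho g) ->
  (forall f g, E1 (f + g) = E1 f + E1 g) ->
  (forall f g, E2 (f + g) = E2 f + E2 g) ->
  (forall f g, E1 (f * g) = E1 f * rho g + rho f * E1 g) ->
  (forall f g, E2 (f * g) = E2 f * rho g + rho f * E2 g) ->
  (forall c : K, E1 c%:P%:P = E2 c%:P%:P) ->
  E1 'X%:P = E2 'X%:P -> E1 'X = E2 'X -> forall f, E1 f = E2 f.
Proof.
move=> rM D1 D2 M1 M2 hC hx hy; apply: Kxy_ind => //.
  by move=> f g h1 h2; rewrite D1 D2 h1 h2.
by move=> f g h1 h2; rewrite M1 M2 h1 h2.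
Qed.

Lemma aut_from_sol {K : fieldType} (hchar : [pchar K] =i pred0) (a b h : {poly K}) :
  h^`() = a * h - b -> ~ Aut_trivial (Dab a b).
Proof.
move=> hh htriv.
have two0 : (2%:R : K) != 0 by rewrite natr0_char.
have c2 : (2%:R^-1 : K) + 2%:R^-1 = 1 by rewrite -mulr2n -(mulr_natr (2%:R^-1 : K)) mulVf.
set q : Kxy K := 'X *+ 2 + h%:P.
set q' : Kxy K := ('X - h%:P) * (2%:R^-1 : K)%:P%:P.
pose rho (f : Kxy K) := f \Po q.
have hrho : in_Aut (Dab a b) rho.
  split.
    split.
    - by move=> f g; rewrite /rho comp_polyD.
    - by move=> f g; rewrite /rho comp_polyM.
    - by rewrite /rho -polyC1 comp_polyC.
    - by move=> c f; rewrite /rho comp_polyM comp_polyC.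
    exists (fun f => f \Po q') => f; rewrite /rho -comp_polyA.
      suff -> : q \Po q' = 'X by rewrite comp_polyXr.
      rewrite /q mulr2n !comp_polyD comp_polyC comp_polyX /q'.
      by rewrite -mulrDr -!polyCD c2 mulr1 subrK.
    suff -> : q' \Po q = 'X by rewrite comp_polyXr.
    rewrite /q' comp_polyM comp_polyB comp_polyX !comp_polyC /q mulr2n addrK.
    by rewrite mulrDl -mulrDr -!polyCD c2 mulr1.
  move=> f.
  apply: (@D_unique _ rho (fun f => rho (Dab a b f)) (fun f => Dab a b (rho f))).
  - by move=> u v; rewrite /rho comp_polyM.
  - by move=> u v; rewrite DabD /rho comp_polyD.
  - by move=> u v; rewrite /rho comp_polyD DabD.
  - by move=> u v; rewrite DabM /rho comp_polyD !comp_polyM.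
  - by move=> u v; rewrite /rho comp_polyM DabM.
  - by move=> c; rewrite /rho DabC comp_poly0 comp_polyC DabC.
  - by rewrite /rho Dabx comp_polyC -polyC1 comp_polyC polyC1 Dabx.
  rewrite /rho DabX comp_polyD comp_polyM !comp_polyC comp_polyX /q.
  rewrite mulr2n !DabD DabX /Dab dxC /dy derivC mulr0 addr0 hh polyCB polyCM.
  move: (a%:P) (b%:P) (h%:P) ('X : Kxy K) => A B H X; ring.
have := congr1 (fun p : Kxy K => p`_1) (htriv rho hrho 'X).
rewrite /rho comp_polyX /q coefD coefMn coefX coefC /= mulr2n addr0.
by move/eqP; rewrite -subr_eq0 addrK oner_eq0.
Qed.


Lemma natr_inj_char {K : fieldType} (hchar : [pchar K] =i pred0) :
  injective (fun n : nat => n%:R : K).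
Proof.
move=> k j /= e.
wlog le : k j e / (k <= j)%N.
  by move=> H; case/orP: (leq_total k j) => h; [|symmetry]; apply: H.
apply/eqP; rewrite eqn_leq le /=.
have : ((j - k)%:R == 0 :> K) by rewrite natrB // e subrr.
by rewrite natr0_char // subn_eq0.
Qed.

Lemma shift_fix {K : fieldType} (hchar : [pchar K] =i pred0) (p : {poly K}) (c : K) :
  (1 < size p)%N -> p \Po ('X + c%:P) = p -> c = 0.
Proof.
move=> sp hp; apply/eqP/negP => /negP c0.
set p0 := p - (p.[0])%:P.
have hp0 : p0 \Po ('X + c%:P) = p0 by rewrite /p0 comp_polyB comp_polyC hp.
have p00 : p0 != 0.
  apply/negP => /eqP e; move: sp; rewrite -(subrK (p.[0])%:P p) -/p0 e add0r size_polyC.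
  by case: (_ != 0).
have h00 : p0.[0] = 0 by rewrite /p0 hornerD hornerN hornerC subrr.
clearbody p0.
have hr : forall k : nat, p0.[k%:R * c] = 0.
  elim=> [|k IH]; first by rewrite mul0r h00.
  have := congr1 (fun q => q.[k%:R * c]) hp0; rewrite /= horner_comp hornerD hornerX hornerC IH => <-.
  by rewrite -[k.+1]addn1 natrD mulrDl mul1r.
suff: (size p0 < size p0)%N by rewrite ltnn.
rewrite -{1}(size_iota 0 (size p0)) -(size_map (fun k : nat => k%:R * c)).
apply: max_poly_roots p00 _ _.
  by apply/allP => x /mapP [k _ ->]; apply/rootP.
rewrite map_inj_uniq ?iota_uniq // => k j /(mulIf c0).
exact: natr_inj_char.
Qed.

Lemma ker_const {K : fieldType} (a b : {poly K}) (u : Kxy K) :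
  simple_derivation (Dab a b) -> Dab a b u = 0 -> exists c : K, u = c%:P%:P.
Proof.
move=> hs hu; case: (classic (exists c : K, u = c%:P%:P)) => // hno.
exfalso; apply: (@principal_not_simple _ a b u 0) => //.
- by apply/negP => /eqP u0; apply: hno; exists 0; rewrite u0.
- by move=> c hc; apply: hno; exists c.
- by rewrite mul0r.
Qed.


Lemma simple_trivial {K : fieldType} (hchar : [pchar K] =i pred0) (a b : {poly K}) :
  a != 0 -> simple_derivation (Dab a b) -> Aut_trivial (Dab a b).
Proof.
move=> ha hs rho [[rD rM r1 rC [sig rs sr]] hcomm].
have rc : forall c : K, rho c%:P%:P = c%:P%:P.
  by move=> c; rewrite -[c%:P%:P]mulr1 rC r1.
have r0 : rho 0 = 0 by rewrite -polyC0 -polyC0 rc.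
have rN : forall f, rho (- f) = - rho f.
  by move=> f; apply/eqP; rewrite -subr_eq0 opprK -rD addNr r0.
have [gam hgam] : exists gam : K, rho 'X%:P = ('X + gam%:P)%:P.
  have [c hc] : exists c : K, rho 'X%:P - 'X%:P = c%:P%:P.
    apply: (ker_const a b _ hs).
    by rewrite DabD DabN -hcomm Dabx r1 subrr.
  by exists c; rewrite polyCD -hc addrC subrK.
set xg : {poly K} := 'X + gam%:P.
have rP : forall p : {poly K}, rho p%:P = (p \Po xg)%:P.
  elim/poly_ind => [|p c IH]; first by rewrite r0 comp_poly0.
  by rewrite polyCD polyCM rD rM IH hgam rc comp_poly_MXaddC [RHS]polyCD polyCM.
set g := rho 'X.
set A := a \Po xg; set B := b \Po xg.
have hDg : Dab a b g = A%:P * g + B%:P.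
  by rewrite /g -hcomm DabX rD rM !rP.
have sg : (1 < size g)%N.
  rewrite ltnNge; apply/negP => sg.
  have H : forall f, (size (rho f) <= 1)%N.
    apply: Kxy_ind.
    - by move=> c; rewrite rc size_polyC leq_b1.
    - by rewrite hgam size_polyC leq_b1.
    - exact: sg.
    - move=> f h H1 H2; rewrite rD (leq_trans (size_polyD _ _)) //.
      by rewrite geq_max H1 H2.
    - move=> f h H1 H2; rewrite rM (leq_trans (size_mul_leq _ _)) //.
      by move: H1 H2; case: (size (rho f)) => [|[|]] //; case: (size (rho h)) => [|[|]].
  by have := H (sig 'X); rewrite sr size_polyX.
have [m sgm] : exists m, size g = m.+2.
  by move: sg; case: (size g) => [|[|m]] // _; exists m.
have gz : g`_m.+2 = 0 by apply: (leq_sizeP _ _ (eq_leq sgm)).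
have gn0 : g`_m.+1 != 0.
  by have := lead_coef_eq0 g; rewrite /lead_coef sgm /= => ->; rewrite -size_poly_eq0 sgm.
have hn : (g`_m.+1)^`() = (A - m.+1%:R * a) * g`_m.+1.
  have := congr1 (fun q : Kxy K => q`_m.+1) hDg.
  rewrite coef_Dab coefD coefCM coefC /= gz mulr0 addr0 => e.
  rewrite addr0 in e; by rewrite mulrBl -e addrK.
have hA : A = m.+1%:R * a.
  apply/eqP; rewrite -subr_eq0; apply/negP => /negP hc.
  have := lt_size_deriv gn0; rewrite hn size_mul //.
  have : (0 < size (A - m.+1%:R * a)%R)%N by rewrite size_poly_gt0.
  by case: (size (A - m.+1%:R * a)%R) => // k _; rewrite addSn /= ltnNge leq_addl.
have m0 : m = 0%N.
  have hl : lead_coef A = lead_coef a.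
    by rewrite /A lead_coef_comp ?size_XaddC // lead_coefXaddC expr1n mulr1.
  move: hl; rewrite hA lead_coefM -polyC_natr lead_coefC => /eqP.
  rewrite -subr_eq0 -{2}(mul1r (lead_coef a)) -mulrBl mulf_eq0 lead_coef_eq0 (negbTE ha) orbF.
  by rewrite mulrSr addrK natr0_char // => /eqP.
subst m.
have sa := simple_nonconst a b ha hs.
rewrite mul1r in hA.
have g0 : gam = 0 by apply: (shift_fix hchar a gam sa).
have eB : B = b by rewrite /B /xg g0 polyC0 addr0 comp_polyXr.
rewrite g0 polyC0 addr0 in hgam.
rewrite eB hA in hDg; rewrite hA mul1r subrr mul0r in hn.
have eg : rho 'X = g by [].
clearbody g; clear rP.
have [l hl] : exists l : K, g`_1 = l%:P.
  by exists (g`_1)`_0; apply: size1_polyC; apply: deriv0_size hchar _ hn.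
have l0 : l != 0 by rewrite -polyC_eq0 -hl.
have h0 : (g`_0)^`() + b * l%:P = a * g`_0 + b.
  have := congr1 (fun q : Kxy K => q`_0) hDg.
  by rewrite coef_Dab coefD coefCM coefC /= !mul0r addr0 mul1r hl.
have l1 : l = 1.
  apply/eqP; apply/negP => /negP hl1; apply: (sol_not_simple a b ((l - 1)^-1 *: g`_0) _ hs).
  have e : (g`_0)^`() = a * g`_0 + b - l *: b by rewrite -h0 mulrC mul_polyC addrK.
  rewrite derivZ e scalerBr scalerDr scalerAr scalerA -addrA; congr (_ + _).
  rewrite -scalerBl -{1}[(l - 1)^-1]mulr1 -mulrBr -(opprB l 1) mulrN mulVf ?scaleN1r //.
  by rewrite subr_eq0.
rewrite l1 mulr1 addrC (addrC _ b) in h0; move/addrI: h0 => h0.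
have g00 : g`_0 = 0.
  apply/eqP/negP => /negP gn.
  have := lt_size_deriv gn; rewrite h0 size_mul //.
  by move: sa; case: (size a) => [|[|k]] // _; rewrite addSn /= ltnNge leq_addl.
have egX : g = 'X.
  apply/polyP => i; rewrite coefX.
  case: i => [|[|i]] /=; first by rewrite g00.
    by rewrite hl l1.
  by apply: (leq_sizeP _ _ (eq_leq sgm)).
apply: Kxy_ind.
- exact: rc.
- exact: hgam.
- by rewrite eg egX.
- by move=> f h H1 H2; rewrite rD H1 H2.
- by move=> f h H1 H2; rewrite rM H1 H2.
Qed.


Theorem theorem1p2 (K : closedFieldType) (hchar : [pchar K] =i pred0)
    (a b : {poly K}) (ha : a != 0) :
  simple_derivation (Dab a b) <-> Aut_trivial (Dab a b).
Proof.
split; first exact: simple_trivial.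
move=> ht hns.
have [h hh] := shamsuddin hchar a b (fun hs => hs hns).
exact: (aut_from_sol hchar a b h hh ht).
Qed.
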